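(* A ring $R$ is almost Armendariz if and only if the Laurent polynomial ring $R[x,x^{-1}]$ is almost Armendariz.
   Context: All rings are associative with identity. For a ring $R$, $P(R)$ denotes the prime radical of $R$ (the intersection of all prime ideals of $R$, equivalently the set of strongly nilpotent elements of $R$). A ring $R$ is called almost Armendariz if whenever $f(x)=\sum_{i=0}^m a_ix^i$ and $g(x)=\sum_{j=0}^n b_jx^j\in R[x]$ satisfy $f(x)g(x)=0$, then $a_ib_j\in P(R)$ for all $0\le i\le m$, $0\le j\le n$. *)

(* Defs.v *)
From HB Require Import structures.
From mathcomp Require Import all_boot all_order all_algebra.
From Stdlib Require Import Lia.
Set Implicit Arguments. Unset Strict Implicit. Unset Printing Implicit Defensive.
Import GRing.Theory.
Local Open Scope ring_scope.
Local Open Scope quotient_scope.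

(* Laurent polynomial ring R[x, x^{-1}] over a (not necessarily commutative)  *)
(* ring R, built as the quotient of {poly R} * nat, where (p, n) stands for   *)
(* p * x^{-n}, by the relation (p, n) ~ (q, m) <-> p * X^m = q * X^n.          *)
(* x is central, so this is the usual Laurent polynomial ring.                *)
Module Laurent.
Section Laurent.
Variable R : nzRingType.
Local Notation T := ({poly R} * nat)%type.
Implicit Types x y z : T.

Lemma mulXnC (p : {poly R}) n : p * 'X^n = 'X^n * p.
Proof. exact: commr_polyXn. Qed.

Lemma mulXnA (p : {poly R}) i j : p * 'X^i * 'X^j = p * 'X^(i + j).
Proof. by rewrite -mulrA -exprD. Qed.

Lemma mulXnI n (p q : {poly R}) : p * 'X^n = q * 'X^n -> p = q.
Proof. by move=> h; rewrite -(drop_polyMXn_id n p) h drop_polyMXn_id. Qed.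

Lemma eqXn a b (p : {poly R}) : a = b -> p * 'X^a = p * 'X^b.
Proof. by move->. Qed.

Ltac nat_lia := rewrite -?plusE; lia.

Definition equivl x y := x.1 * 'X^(y.2) == y.1 * 'X^(x.2).

Lemma equivl_refl : reflexive equivl.
Proof. by move=> x; rewrite /equivl. Qed.

Lemma equivl_sym : symmetric equivl.
Proof. by move=> x y; rewrite /equivl eq_sym. Qed.

Lemma equivl_trans : transitive equivl.
Proof.
move=> [q m] [p n] [r k]; rewrite /equivl /= => /eqP h1 /eqP h2; apply/eqP.
apply: (@mulXnI m).
rewrite mulXnA addnC -mulXnA h1 mulXnA addnC -mulXnA h2 !mulXnA addnC //.
Qed.

Canonical equivl_equiv := EquivRel equivl equivl_refl equivl_sym equivl_trans.

Definition type := {eq_quot equivl}.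
HB.instance Definition _ : EqQuotient _ equivl type := EqQuotient.on type.
HB.instance Definition _ := Choice.on type.

Definition addl x y : T := (x.1 * 'X^(y.2) + y.1 * 'X^(x.2), (x.2 + y.2)%N).
Definition mull x y : T := (x.1 * y.1, (x.2 + y.2)%N).
Definition oppl x : T := (- x.1, x.2).

Lemma addl_compat x x' y y' : equivl x x' -> equivl y y' ->
  equivl (addl x y) (addl x' y').
Proof.
case: x x' y y' => [p n] [p' n'] [q m] [q' m']; rewrite /equivl /=.
move=> /eqP h1 /eqP h2; apply/eqP; rewrite !mulrDl !mulXnA.
rewrite (@eqXn (m + _) (n' + (m + m'))); last by rewrite -!plusE; lia.
rewrite -(mulXnA p n') h1 mulXnA.
rewrite (@eqXn (n + (n' + m')) (m' + (n + n'))); last by nat_lia.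
rewrite -(mulXnA q m') h2 mulXnA.
by congr (_ * 'X^_ + _ * 'X^_); nat_lia.
Qed.

Lemma mulXnAC (p q : {poly R}) n : p * 'X^n * q = p * q * 'X^n.
Proof. by rewrite -mulrA -mulXnC mulrA. Qed.

Lemma mull_compat x x' y y' : equivl x x' -> equivl y y' ->
  equivl (mull x y) (mull x' y').
Proof.
case: x x' y y' => [p n] [p' n'] [q m] [q' m']; rewrite /equivl /=.
move=> /eqP h1 /eqP h2; apply/eqP.
rewrite addnC -mulXnA -(mulrA p q) h2 mulrA mulXnA addnC -mulXnA.
by rewrite -(mulrA p q') (mulXnC q') mulrA h1 mulXnAC mulXnA.
Qed.

Lemma oppl_compat x x' : equivl x x' -> equivl (oppl x) (oppl x').
Proof.
case: x x' => [p n] [p' n']; rewrite /equivl /= !mulNr => /eqP ->.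
exact: eqxx.
Qed.

Lemma equivl_pi x y : equivl x y -> \pi_type x = \pi_type y.
Proof. by move=> h; apply/eqmodP. Qed.

Definition zero : type := \pi_type (0, 0%N).
Definition one : type := \pi_type (1, 0%N).
Definition add := lift_op2 type addl.
Definition mul := lift_op2 type mull.
Definition opp := lift_op1 type oppl.

Lemma pi_add : {morph \pi : x y / addl x y >-> add x y}.
Proof.
move=> x y; unlock add; apply/eqmodP; rewrite /=.
by apply: addl_compat; rewrite equivl_sym; apply/eqmodP; rewrite reprK.
Qed.
Canonical pi_add_morph := PiMorph2 pi_add.

Lemma pi_mul : {morph \pi : x y / mull x y >-> mul x y}.
Proof.
move=> x y; unlock mul; apply/eqmodP; rewrite /=.
by apply: mull_compat; rewrite equivl_sym; apply/eqmodP; rewrite reprK.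
Qed.
Canonical pi_mul_morph := PiMorph2 pi_mul.

Lemma pi_opp : {morph \pi : x / oppl x >-> opp x}.
Proof.
move=> x; unlock opp; apply/eqmodP; rewrite /=.
by apply: oppl_compat; rewrite equivl_sym; apply/eqmodP; rewrite reprK.
Qed.
Canonical pi_opp_morph := PiMorph1 pi_opp.

Lemma laddA : associative add.
Proof.
elim/quotW=> [[p n]]; elim/quotW=> [[q m]]; elim/quotW=> [[r k]].
rewrite !piE; congr \pi; rewrite /addl /=; congr (_, _); last by rewrite addnA.
rewrite !mulrDl !mulXnA addrA; congr (_ * 'X^_ + _ * 'X^_ + _ * 'X^_);
  by rewrite -!plusE; lia.
Qed.

Lemma laddC : commutative add.
Proof.
elim/quotW=> [[p n]]; elim/quotW=> [[q m]]; rewrite !piE; congr \pi.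
by rewrite /addl /= addrC addnC.
Qed.

Lemma ladd0r : left_id zero add.
Proof.
elim/quotW=> [[p n]]; rewrite /zero !piE; congr \pi.
by rewrite /addl /= mul0r add0r expr0 mulr1 add0n.
Qed.

Lemma laddNr : left_inverse zero opp add.
Proof.
elim/quotW=> [[p n]]; rewrite /zero !piE; apply/equivl_pi.
by rewrite /equivl /addl /oppl /= mulNr addNr !mul0r.
Qed.

HB.instance Definition _ := GRing.isZmodule.Build type laddA laddC ladd0r laddNr.

Lemma lmulA : associative mul.
Proof.
elim/quotW=> [[p n]]; elim/quotW=> [[q m]]; elim/quotW=> [[r k]].
by rewrite !piE; congr \pi; rewrite /mull /= mulrA addnA.
Qed.

Lemma lmul1r : left_id one mul.
Proof.
elim/quotW=> [[p n]]; rewrite /one !piE; congr \pi.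
by rewrite /mull /= mul1r add0n.
Qed.

Lemma lmulr1 : right_id one mul.
Proof.
elim/quotW=> [[p n]]; rewrite /one !piE; congr \pi.
by rewrite /mull /= mulr1 addn0.
Qed.

Lemma lmulrDl : left_distributive mul add.
Proof.
elim/quotW=> [[p n]]; elim/quotW=> [[q m]]; elim/quotW=> [[r k]].
rewrite !piE; apply/equivl_pi; rewrite /equivl /addl /mull /=; apply/eqP.
rewrite !mulrDl (mulXnAC p) (mulXnAC q) !mulXnA.
by congr (_ * 'X^_ + _ * 'X^_); rewrite -!plusE; lia.
Qed.

Lemma lmulrDr : right_distributive mul add.
Proof.
elim/quotW=> [[p n]]; elim/quotW=> [[q m]]; elim/quotW=> [[r k]].
rewrite !piE; apply/equivl_pi; rewrite /equivl /addl /mull /=; apply/eqP.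
rewrite !mulrDl !mulrDr mulrDl !mulrA !mulXnA.
by congr (_ * 'X^_ + _ * 'X^_); rewrite -!plusE; lia.
Qed.

Lemma loner_neq0 : one != 0 :> type.
Proof.
rewrite /one /= -[0]/zero /zero piE /equivl /= !expr0 !mulr1.
exact: oner_neq0.
Qed.

HB.instance Definition _ := GRing.Zmodule_isNzRing.Build type
  lmulA lmul1r lmulr1 lmulrDl lmulrDr loner_neq0.

Definition x : type := \pi_type ('X, 0%N).
Definition xinv : type := \pi_type (1, 1%N).

Lemma x_xinv : x * xinv = 1.
Proof.
change (mul x xinv = one); rewrite /x /xinv /one piE.
by apply/equivl_pi; rewrite /equivl /= ?expr0 ?expr1 ?mulr1 ?mul1r ?add0n ?addn0.
Qed.

Lemma xinv_x : xinv * x = 1.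
Proof.
change (mul xinv x = one); rewrite /x /xinv /one piE.
by apply/equivl_pi; rewrite /equivl /= ?expr0 ?expr1 ?mulr1 ?mul1r ?add0n ?addn0.
Qed.

End Laurent.
End Laurent.
HB.export Laurent.


Notation laurent R := (Laurent.type R).

Definition is_ideal (R : nzRingType) (I : R -> Prop) : Prop :=
  [/\ I 0,
      (forall a b, I a -> I b -> I (a + b)),
      (forall a, I a -> I (- a)),
      (forall r a, I a -> I (r * a)) &
      (forall a r, I a -> I (a * r))].

Definition is_prime_ideal (R : nzRingType) (I : R -> Prop) : Prop :=
  [/\ is_ideal I, ~ I 1 &
      (forall a b, (forall r, I (a * r * b)) -> I a \/ I b)].

Definition prime_radical (R : nzRingType) (a : R) : Prop :=
  forall I : R -> Prop, is_prime_ideal I -> I a.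

Definition almost_armendariz (R : nzRingType) : Prop :=
  forall f g : {poly R}, f * g = 0 ->
    forall i j : nat, prime_radical (f`_i * g`_j).

(* Main.v *)
Require Import Defs.
From HB Require Import structures.
From mathcomp Require Import all_boot all_order all_algebra.
Set Implicit Arguments. Unset Strict Implicit. Unset Printing Implicit Defensive.
Import GRing.Theory.
Local Open Scope ring_scope.
Local Open Scope quotient_scope.

Section S.
Variable R : nzRingType.
Local Notation L := (laurent R).
Local Notation T := ({poly R} * nat)%type.

Definition lp (a : T) : L := \pi_L a.

Lemma lpD a b : lp a + lp b = lp (Laurent.addl a b).
Proof. exact: (esym (Laurent.pi_add _ _)). Qed.
Lemma lpM a b : lp a * lp b = lp (Laurent.mull a b).
Proof. exact: (esym (Laurent.pi_mul _ _)). Qed.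
Lemma lpN a : - lp a = lp (Laurent.oppl a).
Proof. exact: (esym (Laurent.pi_opp _)). Qed.
Lemma lp0 : 0 = lp (0, 0%N). Proof. by []. Qed.
Lemma lp1 : 1 = lp (1, 0%N). Proof. by []. Qed.
Lemma lp_eq a b : lp a = lp b <-> Laurent.equivl a b.
Proof. split; [by move/eqmodP | exact: Laurent.equivl_pi]. Qed.
Lemma lpW (P : L -> Prop) : (forall p n, P (lp (p, n))) -> forall l, P l.
Proof. by move=> h; elim/quotW => [[p n]]; apply: h. Qed.

Definition iota (p : {poly R}) : L := lp (p, 0%N).

Lemma iota_zmod : zmod_morphism iota.
Proof.
move=> p q; rewrite /iota lpN lpD; apply/lp_eq.
by rewrite /Laurent.equivl /Laurent.addl /Laurent.oppl /= !expr0 !mulr1.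
Qed.
Lemma iota_mon : monoid_morphism iota.
Proof.
split; first by [].
move=> p q; rewrite /iota lpM; apply/lp_eq.
by rewrite /Laurent.equivl /Laurent.mull /=.
Qed.
HB.instance Definition _ := GRing.isZmodMorphism.Build _ _ iota iota_zmod.
HB.instance Definition _ := GRing.isMonoidMorphism.Build _ _ iota iota_mon.

Lemma x_central (l : L) : Laurent.x R * l = l * Laurent.x R.
Proof.
elim/lpW: l => p n; rewrite /Laurent.x -/(lp _) !lpM; apply/lp_eq.
by rewrite /Laurent.equivl /Laurent.mull /= commr_polyX addn0.
Qed.

Lemma iota_polyX : iota 'X = Laurent.x R. Proof. by []. Qed.

Lemma xn_central n (l : L) : (Laurent.x R) ^+ n * l = l * (Laurent.x R) ^+ n.
Proof.
have : GRing.comm l (Laurent.x R) by rewrite /GRing.comm x_central.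
by move/(commrX n) => ->.
Qed.

Lemma xn_xinvn n : (Laurent.x R) ^+ n * (Laurent.xinv R) ^+ n = 1.
Proof.
rewrite -exprMn_comm ?Laurent.x_xinv ?expr1n //.
by rewrite /GRing.comm Laurent.x_xinv Laurent.xinv_x.
Qed.

Lemma iota_inj p : iota p = 0 -> p = 0.
Proof.
rewrite lp0 /iota => /lp_eq; rewrite /Laurent.equivl /= expr0 !mulr1.
by move/eqP.
Qed.

End S.

From Stdlib Require Import Classical.
From mathcomp Require Import zify.

Section Ideals.
Variable A : nzRingType.

Lemma ideal_sum (I : A -> Prop) n (F : nat -> A) : is_ideal I ->
  (forall k, I (F k)) -> I (\sum_(k < n) F k).
Proof.
move=> [I0 ID _ _ _] h; apply: (big_ind I) => //; exact: h.
Qed.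

Lemma rad_ideal : is_ideal (@prime_radical A).
Proof.
split.
- by move=> Q [[]].
- by move=> a b ha hb Q hQ; case: (hQ) => [[_ D _ _ _] _ _]; apply: D; [apply: ha|apply: hb].
- by move=> a ha Q hQ; case: (hQ) => [[_ _ N _ _] _ _]; apply: N; apply: ha.
- by move=> r a ha Q hQ; case: (hQ) => [[_ _ _ M _] _ _]; apply: M; apply: ha.
- by move=> a r ha Q hQ; case: (hQ) => [[_ _ _ _ M] _ _]; apply: M; apply: ha.
Qed.

Lemma max_bad (P : nat -> Prop) B k : (forall j, (B <= j)%N -> ~ P j) -> P k ->
  exists m, P m /\ forall j, (m < j)%N -> ~ P j.
Proof.
move=> hB; have [n hn] : exists n, (B - k <= n)%N by exists (B - k)%N.
elim: n k hn => [|n IH] k hn hk.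
  by exfalso; apply: (hB k) => //; lia.
case: (classic (exists j, (k < j)%N /\ P j)) => [[j [hkj hj]]|hno].
  apply: (IH j) => //.
  have : (j < B)%N by case: (leqP B j) => // /hB.
  lia.
exists k; split => // j hj pj; apply: hno; by exists j.
Qed.

End Ideals.

Section Transfer.
Variable R : nzRingType.
Local Notation L := (laurent R).
Local Notation T := ({poly R} * nat)%type.
Local Notation iota := (@iota R).
Local Notation lp := (@lp R).

Lemma iota_split (s : {poly R}) :
  iota s = \sum_(k < size s) iota (s`_k)%:P * (Laurent.x R) ^+ k.
Proof.
rewrite -{1}(coefK s) poly_def rmorph_sum; apply: eq_bigr => k _.
by rewrite -mul_polyC rmorphM rmorphXn.
Qed.

Lemma lp_shift p n : lp (p, n) = iota p * lp (1, n).
Proof. by rewrite /iota lpM; apply/lp_eq; rewrite /Laurent.equivl /= mulr1 add0n. Qed.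

Lemma lp1n_comm p n : lp (1, n) * iota p = iota p * lp (1, n).
Proof.
by rewrite /iota !lpM; apply/lp_eq; rewrite /Laurent.equivl /= mulr1 mul1r add0n addn0.
Qed.

Lemma rad_up_C c : prime_radical c -> prime_radical (iota c%:P).
Proof.
move=> hc Q [[Q0 QD QN QMl QMr] Q1 Qp].
pose J := fun c => Q (iota c%:P).
apply: (hc J); split.
- split; rewrite /J.
  + by rewrite polyC0 rmorph0.
  + by move=> a b ha hb; rewrite polyCD rmorphD; apply: (QD).
  + by move=> a ha; rewrite polyCN rmorphN; apply: (QN).
  + by move=> r a ha; rewrite polyCM rmorphM; apply: (QMl).
  + by move=> a r ha; rewrite polyCM rmorphM; apply: (QMr).
- by rewrite /J polyC1 rmorph1.
- move=> a b h; apply: (Qp); elim/lpW => p n.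
  rewrite lp_shift mulrA -mulrA lp1n_comm mulrA -!rmorphM.
  apply: (QMr); rewrite /= iota_split; apply: (big_ind Q) => // k _.
  apply: (QMr); rewrite coefMC coefCM; exact: h.
Qed.

Lemma rad_up (s : {poly R}) : (forall k, prime_radical s`_k) ->
  prime_radical (iota s).
Proof.
move=> h; rewrite iota_split.
case: (rad_ideal L) => Z D _ _ M.
apply: (big_ind (@prime_radical L)) => // k _; apply: M; exact: rad_up_C.
Qed.


Definition good (I : R -> Prop) (y : T) := forall k, I (y.1`_k).

Lemma good_equiv (I : R -> Prop) y z : I 0 -> Laurent.equivl y z -> good I y -> good I z.
Proof.
case: y => p n; case: z => q m I0; rewrite /Laurent.equivl /= => /eqP e hp k /=.
have -> : q`_k = (q * 'X^n)`_(k + n) by rewrite coefMXn ltnNge leq_addl /= addnK.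
by rewrite -e coefMXn; case: ifP => _; [exact: I0 | exact: hp].
Qed.

Definition Qd (I : R -> Prop) (l : L) := good I (repr l).

Lemma Qd_lp I y : I 0 -> Qd I (lp y) <-> good I y.
Proof.
move=> I0.
have e : Laurent.equivl (repr (lp y)) y by apply/lp_eq; rewrite /lp reprK.
split; first exact: good_equiv.
by apply: good_equiv => //; rewrite Laurent.equivl_sym.
Qed.

Lemma Qd_prime I : is_prime_ideal I -> is_prime_ideal (Qd I).
Proof.
move=> [[I0 ID IN IMl IMr] I1 Ip].
split; [split|..].
- by rewrite lp0 Qd_lp // => k /=; rewrite coef0.
- elim/lpW => p n; elim/lpW => q m; rewrite lpD !Qd_lp // => hp hq k /=.
  rewrite coefD !coefMXn; apply: (ID); case: ifP => _ //; by [apply: hp | apply: hq].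
- elim/lpW => p n; rewrite lpN !Qd_lp // => hp k /=; rewrite coefN; exact: IN.
- elim/lpW => r k; elim/lpW => p n; rewrite lpM !Qd_lp // => hp i /=.
  rewrite coefM; apply: (big_ind I) => // j _; exact: IMl.
- elim/lpW => p n; elim/lpW => r k; rewrite lpM !Qd_lp // => hp i /=.
  rewrite coefM; apply: (big_ind I) => // j _; exact: IMr.
- rewrite lp1 Qd_lp // => h; apply: I1; move: (h 0%N); by rewrite /= coef1 eqxx.
- elim/lpW => p n; elim/lpW => q m h.
  case: (classic (good I (p, n))) => [hp|hp]; first by left; rewrite Qd_lp.
  case: (classic (good I (q, m))) => [hq|hq]; first by right; rewrite Qd_lp.
  exfalso.
  have [k0 hk0] : exists k, ~ I p`_k by apply: not_all_ex_not.
  have [l0 hl0] : exists k, ~ I q`_k by apply: not_all_ex_not.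
  have [P0 [hP0 hPmax]] := @max_bad (fun k => ~ I p`_k) (size p) k0
    (fun j hj hn => hn (eq_ind_r I I0 (nth_default 0 hj))) hk0.
  have [Q0 [hQ0 hQmax]] := @max_bad (fun k => ~ I q`_k) (size q) l0
    (fun j hj hn => hn (eq_ind_r I I0 (nth_default 0 hj))) hl0.
  have key : forall r, I (p`_P0 * r * q`_Q0).
    move=> r; have := h (lp (r%:P, 0%N)); rewrite !lpM Qd_lp // => /(_ (P0 + Q0)%N) /=.
    have hlt : (P0 < (P0 + Q0).+1)%N by rewrite ltnS leq_addr.
    rewrite coefM (bigD1 (Ordinal hlt)) //= coefMC addKn => hs.
    have hr : I (\sum_(j < (P0 + Q0).+1 | j != Ordinal hlt)
                   (p * r%:P)`_j * q`_(P0 + Q0 - j)).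
      apply: (big_ind I) => // j hj; rewrite coefMC.
      case: (ltngtP P0 j) => [lt|gt|eq].
      + by apply: (IMr); apply: (IMr); apply: NNPP; exact: hPmax.
      + by apply: (IMl); apply: NNPP; apply: hQmax; lia.
      + by exfalso; move/negP: hj; apply; apply/eqP/val_inj => /=.
    by have := ID _ _ hs (IN _ hr); rewrite addrK.
  by case: (Ip _ _ key).
Qed.

Lemma rad_down_C c : prime_radical (iota c%:P) -> prime_radical c.
Proof.
move=> h I hI; have := h _ (Qd_prime hI).
case: hI => [[I0 _ _ _ _] _ _].
by rewrite /iota Qd_lp // => /(_ 0%N) /=; rewrite coefC eqxx.
Qed.

End Transfer.

Section Main.
Variable R : nzRingType.
Local Notation L := (laurent R).
Local Notation iota := (@iota R).
Local Notation lp := (@lp R).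
Local Notation xx := (Laurent.x R).

Lemma repr_poly (F : {poly L}) :
  exists N (f : {poly {poly R}}), forall i, iota f`_i = F`_i * xx ^+ N.
Proof.
pose rp i := repr F`_i.
pose N := (\max_(i < size F) (rp i).2)%N.
exists N, (\poly_(i < size F) ((rp i).1 * 'X^(N - (rp i).2))) => i.
rewrite coef_poly; case: ltnP => hi.
- have hn : ((rp i).2 <= N)%N := @leq_bigmax _ (fun i : 'I_(size F) => (rp i).2) (Ordinal hi).
  rewrite -[F`_i]reprK -/(rp i) -iota_polyX -rmorphXn.
  move: hn; case: (rp i) => p n /= hn.
  rewrite /iota -/(lp (p, n)) lpM; apply/lp_eq; rewrite /Laurent.equivl /=.
  by rewrite addn0 expr0 mulr1 -mulrA -exprD subnK.
- by rewrite nth_default // rmorph0 mul0r.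
Qed.

Lemma kron_term (p : {poly R}) K i j d : (size p <= K)%N -> (d < K)%N -> j != i ->
  (p * 'X^(K * j))`_(K * i + d) = 0.
Proof.
move=> hs hd hji; rewrite coefMXn; case: ifP => // /negbT; rewrite -leqNgt => hle.
apply: nth_default; apply: (leq_trans hs).
case: (ltngtP i j) => [lt|gt|eq].
- have : (K * i.+1 <= K * j)%N by rewrite leq_mul2l lt orbT.
  rewrite mulnS; lia.
- have : (K * j.+1 <= K * i)%N by rewrite leq_mul2l gt orbT.
  rewrite mulnS; lia.
- by rewrite eq eqxx in hji.
Qed.

Lemma kron_coef (f : {poly {poly R}}) K i d : (forall i, leq (size f`_i) K) ->
  (d < K)%N -> (f.['X^K])`_(K * i + d)%N = f`_i`_d.
Proof.
move=> hs hd; rewrite horner_coef coef_sum.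
case: (ltnP i (size f)) => hi.
- rewrite (bigD1 (Ordinal hi)) //=. rewrite -exprM coefMXn ltnNge leq_addr /= addKn.
  rewrite big1 ?addr0 // => j hj; rewrite -exprM; apply: kron_term => //.
- rewrite [f`_i]nth_default // coef0 big1 // => j _; rewrite -exprM.
  apply: kron_term => //; rewrite neq_ltn; apply/orP; left.
  exact: leq_trans (ltn_ord j) hi.
Qed.


Lemma dir1 : almost_armendariz R -> almost_armendariz L.
Proof.
move=> hR F G hFG i j.
have [N [f hf]] := repr_poly F.
have [M [g hg]] := repr_poly G.
have [Z D _ Ml Mr] := rad_ideal R.
have [ZL _ _ _ MrL] := rad_ideal L.
have hfg : f * g = 0.
  apply/polyP => k; rewrite coef0; apply: iota_inj.
  rewrite coefM rmorph_sum /=.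
  transitivity (\sum_(l < k.+1) F`_l * G`_(k - l) * (xx ^+ N * xx ^+ M)).
    apply: eq_bigr => l _; rewrite rmorphM /= hf hg.
    by rewrite mulrA -(mulrA F`_l) (xn_central N G`_(k - l)) !mulrA.
  by rewrite -big_distrl /= -coefM hFG coef0 mul0r.
pose K := maxn (\max_(a < size f) size (f`_a)%R)%N (\max_(b < size g) size (g`_b)%R)%N.
have hsf : forall a, leq (size f`_a) K.
  move=> a; case: (ltnP a (size f)) => ha.
    apply: leq_trans (leq_maxl _ _).
    exact: (@leq_bigmax _ (fun a : 'I_(size f) => size f`_a) (Ordinal ha)).
  by rewrite nth_default // size_poly0.
have hsg : forall b, leq (size g`_b) K.
  move=> b; case: (ltnP b (size g)) => hb.
    apply: leq_trans (leq_maxr _ _).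
    exact: (@leq_bigmax _ (fun b : 'I_(size g) => size g`_b) (Ordinal hb)).
  by rewrite nth_default // size_poly0.
have hK : f.['X^K] * g.['X^K] = 0.
  rewrite -hornerM_comm ?hfg ?horner0 //.
  by rewrite /comm_poly; apply/esym/commr_polyXn.
have hcoef : forall a b d e, prime_radical (f`_a`_d * g`_b`_e).
  move=> a b d e.
  case: (ltnP d K) => hd; last by rewrite (nth_default _ (leq_trans (hsf a) hd)) mul0r.
  case: (ltnP e K) => he; last by rewrite (nth_default _ (leq_trans (hsg b) he)) mulr0.
  by have := hR _ _ hK (K * a + d)%N (K * b + e)%N; rewrite !kron_coef.
have hfgij : forall k, prime_radical ((f`_i * g`_j)`_k).
  move=> k; rewrite coefM; apply: (big_ind (@prime_radical R)) => // l _.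
have hup := rad_up hfgij.
have e : F`_i * G`_j = iota (f`_i * g`_j) * ((Laurent.xinv R) ^+ N * (Laurent.xinv R) ^+ M).
  rewrite rmorphM /= hf hg mulrA -(mulrA F`_i) xn_central !mulrA.
  by rewrite -(mulrA _ (xx ^+ N)) xn_xinvn mulr1 -(mulrA _ (xx ^+ M)) xn_xinvn mulr1.
by rewrite e; apply: MrL.
Qed.

Lemma dir2 : almost_armendariz L -> almost_armendariz R.
Proof.
move=> hL f g hfg i j.
have := hL (map_poly (iota \o polyC) f) (map_poly (iota \o polyC) g) _ i j.
rewrite !coef_map /= -[iota _ * iota _]rmorphM -polyCM => H; apply: rad_down_C; apply: H.
by rewrite -rmorphM hfg rmorph0.
Qed.

End Main.

Theorem theorem2p4 (R : nzRingType) :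
  almost_armendariz R <-> almost_armendariz (laurent R).
Proof. by split; [apply: dir1 | apply: dir2]. Qed.
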